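(* Let $A$ be a ring in which $2$ is a unit, and let $N_1,\dots,N_s$ be pairwise non-isomorphic $A$-modules with local endomorphism rings. The homomorphism $\Delta\colon\mathrm{Aut}_A(N_1)\times\cdots\times\mathrm{Aut}_A(N_s)\to\mathrm{Aut}_A(N_1\oplus\cdots\oplus N_s)$, $\Delta(\varphi_1,\dots,\varphi_s)=d_1(\varphi_1)\cdots d_s(\varphi_s)$, induces a surjective homomorphism $$\Delta_{\mathrm{ab}}\colon\mathrm{Aut}_A(N_1)_{\mathrm{ab}}\oplus\cdots\oplus\mathrm{Aut}_A(N_s)_{\mathrm{ab}}\to\mathrm{Aut}_A(N_1\oplus\cdots\oplus N_s)_{\mathrm{ab}}.$$
   Context: $G_{\mathrm{ab}}=G/[G,G]$. $d_i(\varphi)$ denotes the diagonal automorphism of $N_1\oplus\cdots\oplus N_s$ with diagonal entries $1_{N_1},\dots,1_{N_{i-1}},\varphi,1_{N_{i+1}},\dots,1_{N_s}$ and zero off-diagonal entries. *)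

(* Defs.v *)
From HB Require Import structures.
From mathcomp Require Import all_boot all_order all_algebra.
Set Implicit Arguments. Unset Strict Implicit. Unset Printing Implicit Defensive.
Import GRing.Theory.
Local Open Scope ring_scope.

Definition is_linear (A : pzRingType) (M N : lmodType A) (f : M -> N) : Prop :=
  forall (a : A) (x y : M), f (a *: x + y) = a *: f x + f y.

Definition is_aut (A : pzRingType) (M : lmodType A) (f : M -> M) : Prop :=
  is_linear f /\ bijective f.

Definition iso_mod (A : pzRingType) (M N : lmodType A) : Prop :=
  exists f : M -> N, is_linear f /\ bijective f.

(* End_A(M) is a local ring: End_A(M) is a nonzero ring (1 <> 0) and
   the non-invertible elements of End_A(M) form a two-sided ideal. *)
Definition local_End (A : pzRingType) (M : lmodType A) : Prop :=
  ~ (forall x : M, x = 0)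
  /\ (forall f g : M -> M, is_linear f -> is_linear g ->
        ~ is_aut f -> ~ is_aut g -> ~ is_aut (fun x => f x + g x))
  /\ (forall f g : M -> M, is_linear f -> is_linear g ->
        ~ is_aut f -> ~ is_aut (f \o g) /\ ~ is_aut (g \o f)).

(* underlying set of the (finite) direct sum, with pointwise operations *)
Definition dsum (A : pzRingType) (s : nat) (N : 'I_s -> lmodType A) : Type :=
  forall i : 'I_s, N i.

Definition is_linear_ds (A : pzRingType) (s : nat) (N : 'I_s -> lmodType A)
  (g : dsum N -> dsum N) : Prop :=
  forall (a : A) (x y : dsum N) (j : 'I_s),
    g (fun i => a *: x i + y i) j = a *: g x j + g y j.

Definition is_aut_ds (A : pzRingType) (s : nat) (N : 'I_s -> lmodType A)
  (g : dsum N -> dsum N) : Prop :=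
  is_linear_ds g /\ bijective g.

Definition diag_at (A : pzRingType) (s : nat) (N : 'I_s -> lmodType A)
  (i : 'I_s) (phi : N i -> N i) : dsum N -> dsum N :=
  fun x => dfwith x (phi (x i)).

Definition Delta (A : pzRingType) (s : nat) (N : 'I_s -> lmodType A)
  (phi : forall i : 'I_s, N i -> N i) : dsum N -> dsum N :=
  foldr (fun i g => diag_at (phi i) \o g) id (enum 'I_s).

(* The commutator subgroup [G,G] of G = Aut_A(N_1 (+) ... (+) N_s): the
   subgroup generated by the commutators a^-1 b^-1 a b, a, b in G. *)
Inductive in_derived (A : pzRingType) (s : nat) (N : 'I_s -> lmodType A) :
    (dsum N -> dsum N) -> Prop :=
| der_id : in_derived (@id (dsum N))
| der_step (h a a' b b' : dsum N -> dsum N) :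
    in_derived h -> is_aut_ds a -> is_aut_ds b ->
    cancel a a' -> cancel a' a -> cancel b b' -> cancel b' b ->
    in_derived (h \o (a' \o b' \o a \o b)).

(* Main.v *)
Require Import Defs.
From HB Require Import structures.
From mathcomp Require Import all_boot all_order all_algebra.
From Stdlib Require Import FunctionalExtensionality Classical.
Import GRing.Theory.
Local Open Scope ring_scope.
Set Implicit Arguments. Unset Strict Implicit.

Lemma lin0 (A : pzRingType) (M N : lmodType A) (f : M -> N) :
  is_linear f -> f 0 = 0.
Proof.
move=> hf; have h := hf 1 0 0; rewrite !scale1r addr0 in h.
by apply: (addrI (f 0)); rewrite addr0 -h.
Qed.

Lemma linD (A : pzRingType) (M N : lmodType A) (f : M -> N) x y :
  is_linear f -> f (x + y) = f x + f y.
Proof. by move=> hf; rewrite -[x]scale1r hf !scale1r. Qed.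

Lemma linZ (A : pzRingType) (M N : lmodType A) (f : M -> N) a x :
  is_linear f -> f (a *: x) = a *: f x.
Proof. by move=> hf; rewrite -[a *: x]addr0 hf (lin0 hf) addr0. Qed.

Lemma linN (A : pzRingType) (M N : lmodType A) (f : M -> N) x :
  is_linear f -> f (- x) = - f x.
Proof. by move=> hf; rewrite -scaleN1r linZ // scaleN1r. Qed.

Lemma linB (A : pzRingType) (M N : lmodType A) (f : M -> N) x y :
  is_linear f -> f (x - y) = f x - f y.
Proof. by move=> hf; rewrite linD // linN. Qed.

Definition zds (A : pzRingType) (s : nat) (N : 'I_s -> lmodType A) : dsum N :=
  fun i => 0.

Lemma lds0 (A : pzRingType) (s : nat) (N : 'I_s -> lmodType A) (g : dsum N -> dsum N) j :
  is_linear_ds g -> g (zds N) j = 0.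
Proof.
move=> hg; have := hg 1 (zds N) (zds N) j.
have -> : (fun i => 1 *: zds N i + zds N i) = zds N.
  by apply: functional_extensionality_dep => i; rewrite /zds scale1r addr0.
rewrite scale1r => h.
by apply: (addrI (g (zds N) j)); rewrite addr0 -h.
Qed.

Lemma ldsD (A : pzRingType) (s : nat) (N : 'I_s -> lmodType A) (g : dsum N -> dsum N) x y j :
  is_linear_ds g -> g (fun i => x i + y i) j = g x j + g y j.
Proof.
move=> hg; have := hg 1 x y j.
have -> : (fun i => 1 *: x i + y i) = (fun i => x i + y i).
  by apply: functional_extensionality_dep => i; rewrite scale1r.
by rewrite scale1r.
Qed.

Lemma ldsZ (A : pzRingType) (s : nat) (N : 'I_s -> lmodType A) (g : dsum N -> dsum N) a x j :
  is_linear_ds g -> g (fun i => a *: x i) j = a *: g x j.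
Proof.
move=> hg; have := hg a x (zds N) j.
have -> : (fun i => a *: x i + zds N i) = (fun i => a *: x i).
  by apply: functional_extensionality_dep => i; rewrite /zds addr0.
by rewrite lds0 // addr0.
Qed.

Definition inj (A : pzRingType) (s : nat) (N : 'I_s -> lmodType A) (k : 'I_s) (v : N k)
  : dsum N := dfwith (zds N) v.

Lemma inj_in (A : pzRingType) (s : nat) (N : 'I_s -> lmodType A) k (v : N k) :
  inj v k = v.
Proof. exact: dfwith_in. Qed.

Lemma inj_out (A : pzRingType) (s : nat) (N : 'I_s -> lmodType A) k (v : N k) j :
  k != j -> inj v j = 0.
Proof. by move=> h; rewrite /inj dfwith_out. Qed.

Lemma inj_lin (A : pzRingType) (s : nat) (N : 'I_s -> lmodType A) k a (v w : N k) :
  inj (a *: v + w) = (fun i => a *: inj v i + inj w i).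
Proof.
apply: functional_extensionality_dep => i.
case: (eqVneq k i) => [<-|ne]; first by rewrite !inj_in.
by rewrite !inj_out // scaler0 addr0.
Qed.

Lemma inj0 (A : pzRingType) (s : nat) (N : 'I_s -> lmodType A) k :
  inj (0 : N k) = zds N.
Proof.
apply: functional_extensionality_dep => i.
by case: (eqVneq k i) => [<-|ne]; [rewrite inj_in | rewrite inj_out].
Qed.

Definition restr (A : pzRingType) (s : nat) (N : 'I_s -> lmodType A) (l : seq 'I_s)
  (x : dsum N) : dsum N := fun i => if i \in l then x i else 0.

Lemma decomp_l (A : pzRingType) (s : nat) (N : 'I_s -> lmodType A) (g : dsum N -> dsum N) l x j :
  is_linear_ds g -> uniq l ->
  g (restr l x) j = \sum_(m <- l) g (inj (x m)) j.
Proof.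
move=> hg; elim: l => [|m l IH] /=.
  move=> _; rewrite big_nil.
  have -> : restr [::] x = zds N by apply: functional_extensionality_dep.
  exact: lds0.
case/andP=> ml ul; rewrite big_cons -IH // -ldsD //; congr (g _ j).
apply: functional_extensionality_dep => i; rewrite /restr in_cons.
case: (eqVneq m i) => [<-|ne].
  by rewrite inj_in (negbTE ml) addr0.
by rewrite inj_out // add0r.
Qed.

Lemma decomp (A : pzRingType) (s : nat) (N : 'I_s -> lmodType A) (g : dsum N -> dsum N) x j :
  is_linear_ds g -> g x j = \sum_(m <- enum 'I_s) g (inj (x m)) j.
Proof.
move=> hg; rewrite -decomp_l ?enum_uniq //; congr (g _ j).
by apply: functional_extensionality_dep => i; rewrite /restr mem_enum.
Qed.

Lemma lin_inv (A : pzRingType) (M : lmodType A) (f f' : M -> M) :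
  is_linear f -> cancel f f' -> cancel f' f -> is_linear f'.
Proof.
move=> hf c1 c2 a x y; apply: (can_inj c1).
by rewrite hf !c2.
Qed.

Lemma lin_id (A : pzRingType) (M : lmodType A) : is_linear (@id M).
Proof. by []. Qed.

Lemma lin_comp (A : pzRingType) (M : lmodType A) (f g : M -> M) :
  is_linear f -> is_linear g -> is_linear (f \o g).
Proof. by move=> hf hg a x y /=; rewrite hg hf. Qed.

Lemma lin_add (A : pzRingType) (M : lmodType A) (f g : M -> M) :
  is_linear f -> is_linear g -> is_linear (fun x => f x + g x).
Proof.
move=> hf hg a x y; rewrite hf hg scalerDr.
by rewrite addrACA.
Qed.

Lemma lin_sum (A : pzRingType) (M : lmodType A) (I : Type) (l : seq I) (F : I -> M -> M) :
  (forall i, is_linear (F i)) -> is_linear (fun x => \sum_(i <- l) F i x).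
Proof.
move=> hF; elim: l => [|i l IH] a x y.
  by rewrite !big_nil scaler0 addr0.
rewrite !big_cons hF IH scalerDr; exact: addrACA.
Qed.

Lemma zero_not_aut (A : pzRingType) (M : lmodType A) :
  local_End M -> ~ is_aut (fun _ : M => 0).
Proof.
case=> nt _ [_ [f' _ c2]]; apply: nt => x.
by rewrite -(c2 x).
Qed.

Lemma sum_not_aut (A : pzRingType) (M : lmodType A) (I : eqType) (l : seq I) (F : I -> M -> M) :
  local_End M -> (forall i, is_linear (F i)) -> (forall i, i \in l -> ~ is_aut (F i)) ->
  ~ is_aut (fun x => \sum_(i <- l) F i x).
Proof.
move=> hM hF; elim: l => [|i l IH] hn.
  have -> : (fun x => \sum_(i <- [::]) F i x) = (fun _ => 0) by
    apply: functional_extensionality => x; rewrite big_nil.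
  exact: zero_not_aut.
have -> : (fun x => \sum_(j <- i :: l) F j x) = (fun x => F i x + \sum_(j <- l) F j x) by
  apply: functional_extensionality => x; rewrite big_cons.
case: hM => _ [h2 _]; apply: h2 => //; first exact: lin_sum.
  by apply: hn; rewrite mem_head.
by apply: IH => j jl; apply: hn; rewrite in_cons jl orbT.
Qed.

Lemma linG_comp (A : pzRingType) (M P Q : lmodType A) (f : P -> Q) (g : M -> P) :
  is_linear f -> is_linear g -> is_linear (f \o g).
Proof. by move=> hf hg a x y /=; rewrite hg hf. Qed.

Lemma id_aut (A : pzRingType) (M : lmodType A) : is_aut (@id M).
Proof. by split; [exact: lin_id | exists id]. Qed.

Lemma comp_not_aut (A : pzRingType) (M P : lmodType A) (al : P -> M) (be : M -> P) :
  local_End M -> local_End P -> ~ iso_mod M P -> is_linear al -> is_linear be ->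
  ~ is_aut (al \o be).
Proof.
move=> [ntM _] [_ [lP2 _]] niso hal hbe [hab [ga c1 c2]].
have hga : is_linear ga by apply: lin_inv c1 c2.
pose e := be \o (ga \o al).
have he : is_linear e by apply: linG_comp => //; apply: linG_comp.
case: (Classical_Prop.classic (is_aut e)) => [[_ [e' d1 d2]]|ne].
  apply: niso; exists be; split => //.
  have binj : injective be.
    by move=> x y h; rewrite -(c1 x) -(c1 y) /= h.
  exists (ga \o al \o e') => w.
    by apply: binj; have := d2 (be w).
  by have := d2 w.
have hd : is_aut (fun x => x - e x).
  case: (Classical_Prop.classic (is_aut (fun x => x - e x))) => // nd.
  exfalso; apply: (lP2 e (fun x => x - e x)) => //.
    move=> a x y; rewrite he scalerBr; rewrite addrACA opprD //.
  have -> : (fun x => e x + (x - e x)) = id.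
    by apply: functional_extensionality => x; rewrite addrC subrK.
  exact: id_aut.
case: hd => hdl [d' d1 d2].
have b0 : forall w, be w = 0.
  move=> w; rewrite -(d1 (be w)) -[X in _ = X](d1 0).
  congr d'; rewrite /e /= c1 subrr.
  by have := lin0 he; rewrite /e /= => ->; rewrite subr0.
apply: ntM => y; rewrite -(c2 y) /= b0; exact: lin0.
Qed.

Definition comp (A : pzRingType) (s : nat) (N : 'I_s -> lmodType A) (g : dsum N -> dsum N)
  (j m : 'I_s) : N m -> N j := fun v => g (inj v) j.
Arguments comp {A s N} g j m.

Lemma comp_lin (A : pzRingType) (s : nat) (N : 'I_s -> lmodType A) (g : dsum N -> dsum N) j m :
  is_linear_ds g -> is_linear (comp g j m).
Proof. by move=> hg a v w; rewrite /comp inj_lin hg. Qed.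

Lemma lds_inv (A : pzRingType) (s : nat) (N : 'I_s -> lmodType A) (g h : dsum N -> dsum N) :
  is_linear_ds g -> cancel g h -> cancel h g -> is_linear_ds h.
Proof.
move=> hg c1 c2 a x y j.
have -> : h (fun i => a *: x i + y i) = (fun i => a *: h x i + h y i); last by [].
apply: (can_inj c1); rewrite c2; apply: functional_extensionality_dep => i.
by rewrite hg !c2.
Qed.

Lemma diag_aut (A : pzRingType) (s : nat) (N : 'I_s -> lmodType A)
  (hloc : forall i : 'I_s, local_End (N i))
  (hnoniso : forall i j : 'I_s, i != j -> ~ iso_mod (N i) (N j))
  (g : dsum N -> dsum N) (hg : is_aut_ds g) j : is_aut (comp g j j).
Proof.
case: hg => hgl [h c1 c2].
have hhl := lds_inv hgl c1 c2.
case: (classic (is_aut (comp g j j))) => // nd; exfalso.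
pose F := fun m : 'I_s => comp g j m \o comp h m j.
have hF : forall m, is_linear (F m).
  by move=> m; apply: linG_comp; apply: comp_lin.
have eid : (fun v => \sum_(m <- enum 'I_s) F m v) = id.
  apply: functional_extensionality => v.
  by rewrite -[RHS](inj_in (N := N)) -[in RHS](c2 (inj v)) (decomp _ _ hgl).
apply: (sum_not_aut (hloc j) hF (l := enum 'I_s)); last by rewrite eid; exact: id_aut.
move=> m _; case: (eqVneq j m) => [<-|ne].
  by case: (hloc j) => _ [_ h3]; case: (h3 _ _ (@comp_lin _ _ _ g j j hgl) (@comp_lin _ _ _ h j j hhl) nd).
rewrite /F; apply: (comp_not_aut (hloc j) (hloc m) (hnoniso _ _ ne)); exact: comp_lin.
Qed.

Definition tv (A : pzRingType) (s : nat) (N : 'I_s -> lmodType A) (k : 'I_s)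
  (be : forall j, N k -> N j) : dsum N -> dsum N := fun x j => x j + be j (x k).
Arguments tv {A s N} k be.

Definition ntv (A : pzRingType) (s : nat) (N : 'I_s -> lmodType A) (k : 'I_s)
  (be : forall j, N k -> N j) : forall j, N k -> N j := fun j v => - be j v.
Arguments ntv {A s N} k be.

Lemma tv_lin (A : pzRingType) (s : nat) (N : 'I_s -> lmodType A) k (be : forall j, N k -> N j) :
  (forall j, is_linear (be j)) -> is_linear_ds (tv k be).
Proof.
move=> hb a x y j; rewrite /tv hb scalerDr.
by rewrite addrACA.
Qed.

Lemma ntv_lin (A : pzRingType) (s : nat) (N : 'I_s -> lmodType A) k (be : forall j, N k -> N j) :
  (forall j, is_linear (be j)) -> forall j, is_linear (ntv k be j).
Proof. by move=> hb j a x y; rewrite /ntv hb opprD scalerN. Qed.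

Lemma ntv0 (A : pzRingType) (s : nat) (N : 'I_s -> lmodType A) k (be : forall j, N k -> N j) :
  (forall v, be k v = 0) -> forall v, ntv k be k v = 0.
Proof. by move=> h v; rewrite /ntv h oppr0. Qed.

Lemma tv_can (A : pzRingType) (s : nat) (N : 'I_s -> lmodType A) k (be : forall j, N k -> N j) :
  (forall v, be k v = 0) -> cancel (tv k be) (tv k (ntv k be)).
Proof.
move=> h0 x; apply: functional_extensionality_dep => j.
by rewrite /tv /ntv h0 addr0 addrK.
Qed.

Lemma tv_can' (A : pzRingType) (s : nat) (N : 'I_s -> lmodType A) k (be : forall j, N k -> N j) :
  (forall v, be k v = 0) -> cancel (tv k (ntv k be)) (tv k be).
Proof.
move=> h0 x; apply: functional_extensionality_dep => j.
by rewrite /tv /ntv h0 oppr0 addr0 subrK.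
Qed.

Lemma tv_aut (A : pzRingType) (s : nat) (N : 'I_s -> lmodType A) k (be : forall j, N k -> N j) :
  (forall j, is_linear (be j)) -> (forall v, be k v = 0) -> is_aut_ds (tv k be).
Proof.
move=> hl h0; split; first exact: tv_lin.
by exists (tv k (ntv k be)); [apply: tv_can | apply: tv_can'].
Qed.

Definition dk (A : pzRingType) (s : nat) (N : 'I_s -> lmodType A) (k : 'I_s) (c : A)
  : dsum N -> dsum N := fun x j => (if j == k then c else 1) *: x j.
Arguments dk {A s N} k c.

Lemma dk_lin (A : pzRingType) (s : nat) (N : 'I_s -> lmodType A) k (c : A) :
  (forall a, c * a = a * c) -> is_linear_ds (dk (N := N) k c).
Proof.
move=> hc a x y j; rewrite /dk scalerDr !scalerA; congr (_ *: _ + _).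
by case: (j == k) => //; rewrite mul1r mulr1.
Qed.

Lemma dk_can (A : pzRingType) (s : nat) (N : 'I_s -> lmodType A) k (c c' : A) :
  c' * c = 1 -> cancel (dk (N := N) k c) (dk k c').
Proof.
move=> h x; apply: functional_extensionality_dep => j.
by rewrite /dk scalerA; case: (j == k); rewrite ?h ?mulr1 scale1r.
Qed.

Lemma der_tv (A : unitRingType) (s : nat) (N : 'I_s -> lmodType A)
  (h2 : (2%:R : A) \is a GRing.unit) k (be : forall j, N k -> N j) (h : dsum N -> dsum N) :
  (forall j, is_linear (be j)) -> (forall v, be k v = 0) ->
  in_derived h -> in_derived (h \o tv k be).
Proof.
move=> hl h0 hd.
have c2 : forall a : A, 2%:R * a = a * 2%:R by move=> a; rewrite mulr_natl mulr_natr.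
have c2' : forall a : A, 2%:R^-1 * a = a * 2%:R^-1.
  by move=> a; apply/esym/commrV/esym; exact: c2.
have hda : is_aut_ds (dk (N := N) k 2%:R).
  split; first exact: dk_lin.
  by exists (dk k 2%:R^-1); apply: dk_can; [rewrite mulVr | rewrite divrr].
have hdb := tv_aut (ntv_lin hl) (ntv0 h0).
have := der_step hd hda hdb (dk_can k (mulVr h2)) (dk_can k (divrr h2))
   (tv_can' h0) (tv_can h0).
congr in_derived; apply: functional_extensionality => x /=; congr h.
apply: functional_extensionality_dep => j.
rewrite /dk /tv /ntv. have -> : (k == k) = true by exact: eqxx. rewrite h0 subr0.
case: (eqVneq j k) => [->|ne].
  by rewrite !h0 addr0 scalerA mulVr // scale1r subr0 addr0.
by rewrite !scale1r (linZ _ _ (hl j)) scaler_nat mulr2n addrA subrK.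
Qed.



Lemma Delta_eq (A : pzRingType) (s : nat) (N : 'I_s -> lmodType A)
  (phi : forall i : 'I_s, N i -> N i) x : Delta phi x = fun j => phi j (x j).
Proof.
have gen : forall l : seq 'I_s, uniq l -> forall j,
   foldr (fun i g => diag_at (phi i) \o g) id l x j = if j \in l then phi j (x j) else x j.
  elim => [|i l IH] //= /andP [il ul] j.
  rewrite /diag_at /= in_cons.
  case: (eqVneq i j) => [<-|ne].
    by rewrite dfwith_in IH // (negbTE il) ?eqxx.
  by rewrite dfwith_out // IH // eq_sym (negbTE ne).
apply: functional_extensionality_dep => j.
by rewrite /Delta gen ?enum_uniq // mem_enum.
Qed.

Lemma lds_comp (A : pzRingType) (s : nat) (N : 'I_s -> lmodType A) (f g : dsum N -> dsum N) :
  is_linear_ds f -> is_linear_ds g -> is_linear_ds (f \o g).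
Proof.
move=> hf hg a x y j /=.
have -> : g (fun i => a *: x i + y i) = (fun i => a *: g x i + g y i).
  by apply: functional_extensionality_dep => i; rewrite hg.
by rewrite hf.
Qed.

Definition cleared (A : pzRingType) (s : nat) (N : 'I_s -> lmodType A) (g : dsum N -> dsum N)
  (n : nat) := forall m : 'I_s, (m < n)%N -> forall j, j != m -> forall v : N m, g (inj v) j = 0.

Lemma step_ind (A : unitRingType) (s : nat) (N : 'I_s -> lmodType A)
  (h2 : (2%:R : A) \is a GRing.unit)
  (hloc : forall i : 'I_s, local_End (N i))
  (hnoniso : forall i j : 'I_s, i != j -> ~ iso_mod (N i) (N j))
  (g : dsum N -> dsum N) (hg : is_aut_ds g) n : (n <= s)%N ->
  exists h g', [/\ in_derived h, is_aut_ds g', (forall x, g x = h (g' x)) & cleared g' n].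
Proof.
elim: n => [_|n IH ns].
  exists id, g; split => //; try exact: der_id; by move=> m.
have [h [g' [hd ha hx hc]]] := IH (ltnW ns).
pose k := Ordinal ns.
have [hkl [ginv ci1 ci2]] := diag_aut hloc hnoniso ha k.
have hgl : is_linear_ds g' by case: ha.
pose be := fun (j : 'I_s) (v : N k) => if j == k then 0 else - g' (inj (ginv v)) j.
have bel : forall j, is_linear (be j).
  move=> j a v w; rewrite /be; case: (j == k); first by rewrite scaler0 addr0.
  have hgi := lin_inv hkl ci1 ci2.
  by rewrite hgi inj_lin hgl scalerN opprD.
have be0 : forall v, be k v = 0 by move=> v; rewrite /be; case: eqP.
exists (h \o tv k (ntv k be)), (tv k be \o g'); split.
- exact: (der_tv h2 (ntv_lin bel) (ntv0 be0) hd).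
- split; first by apply: lds_comp => //; exact: tv_lin.
  case: ha => _ hb; apply: bij_comp => //.
  by exists (tv k (ntv k be)); [apply: tv_can | apply: tv_can'].
- by move=> x; rewrite hx /= tv_can.
move=> m; rewrite ltnS leq_eqVlt => /orP [/eqP mk|mn] j jm v; rewrite /tv /=.
  have mk' : m = k by apply: val_inj.
  subst m; rewrite /be (negbTE jm).
  by have := ci1 v; rewrite /comp => ->; rewrite subrr.
have km : k != m by rewrite -(inj_eq val_inj) /= neq_ltn mn orbT.
by rewrite hc // hc // (lin0 (bel j)) addr0.
Qed.

Unset Implicit Arguments.
Set Strict Implicit.

Theorem mainTheorem14 (A : unitRingType) (s : nat) (N : 'I_s -> lmodType A)
  (h2 : (2%:R : A) \is a GRing.unit)
  (hloc : forall i : 'I_s, local_End (N i))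
  (hnoniso : forall i j : 'I_s, i != j -> ~ iso_mod (N i) (N j))
  (g : dsum N -> dsum N) (hg : is_aut_ds g) :
  exists phi : forall i : 'I_s, N i -> N i,
    (forall i, is_aut (phi i)) /\
    exists h : dsum N -> dsum N,
      in_derived h /\ forall x : dsum N, g x = h (Delta phi x).
Proof.
have [h [g' [hd ha hx hc]]] := step_ind h2 hloc hnoniso hg (leqnn s).
have hgl : is_linear_ds g' by case: ha.
exists (fun j => comp g' j j); split; first by move=> i; exact: diag_aut.
exists h; split => // x; rewrite hx Delta_eq; congr h.
apply: functional_extensionality_dep => j.
rewrite (decomp _ _ hgl) (bigD1_seq j) ?mem_enum ?enum_uniq //= big1 ?addr0 //.
move=> m mj; apply: hc; [exact: ltn_ord | by rewrite eq_sym].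
Qed.
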